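(* Let $n,m \in \mathbb{N}$, $a \in \Delta_n^+$, $b \in \Delta_m^+$, and $\lambda > 0$. Define $\Phi_\lambda \colon \mathbb{R}^{n\times m} \to \Pi_{a,b}^+$ by \[ \Phi_\lambda(C) = \operatorname{argmin}_{\pi \in \Pi_{a,b}} \big(\langle C, \pi\rangle + \lambda h(\pi)\big). \] Then for all $C_1, C_2 \in \mathbb{R}^{n\times m}$, \[ \|\Phi_\lambda(C_1) - \Phi_\lambda(C_2)\|_1 \le \frac{\|C_1 - C_2\|_\infty}{\lambda}. \]
   Context: $\Delta_n^+ := \{a \in \mathbb{R}^n : a_i > 0\ \forall i,\ \sum_i a_i = 1\}$. $\Pi_{a,b} := \{\pi \in \mathbb{R}_+^{n\times m} : \pi 1_m = a,\ \pi^\top 1_n = b\}$ and $\Pi_{a,b}^+$ is its subset of matrices with all entries strictly positive. $h(\pi) := \sum_{i,j}\pi_{ij}\log\frac{\pi_{ij}}{e}$ (with $0\log 0=0$); the minimizer defining $\Phi_\lambda(C)$ exists, is unique, and lies in $\Pi_{a,b}^+$. $\langle\cdot,\cdot\rangle$ is the Frobenius inner product; for a matrix $A$, $\|A\|_1 := \sum_{i,j}|A_{ij}|$ and $\|A\|_\infty := \max_{i,j}|A_{ij}|$. *)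

(* Defs.v *)
From HB Require Import structures.
From mathcomp Require Import all_boot all_order all_algebra.
From mathcomp Require Import all_classical all_reals all_analysis.
Set Implicit Arguments. Unset Strict Implicit. Unset Printing Implicit Defensive.
Import Order.TTheory GRing.Theory Num.Theory.
Local Open Scope ring_scope.

Definition simplex_pos (R : realType) (n : nat) (a : 'I_n -> R) : Prop :=
  (forall i, 0 < a i) /\ \sum_(i < n) a i = 1.

Definition Pi (R : realType) (n m : nat) (a : 'I_n -> R) (b : 'I_m -> R)
  (pi : 'M[R]_(n, m)) : Prop :=
  (forall i j, 0 <= pi i j) /\
  (forall i, \sum_(j < m) pi i j = a i) /\
  (forall j, \sum_(i < n) pi i j = b j).

Definition hent (R : realType) (n m : nat) (pi : 'M[R]_(n, m)) : R :=
  \sum_(i < n) \sum_(j < m)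
     (if pi i j == 0 then 0 else pi i j * ln (pi i j / expR 1)).

Definition frob (R : realType) (n m : nat) (A B : 'M[R]_(n, m)) : R :=
  \sum_(i < n) \sum_(j < m) A i j * B i j.

Definition norm1 (R : realType) (n m : nat) (A : 'M[R]_(n, m)) : R :=
  \sum_(i < n) \sum_(j < m) `|A i j|.

Definition norminf (R : realType) (n m : nat) (A : 'M[R]_(n, m)) : R :=
  \big[Num.max/0]_(i < n) \big[Num.max/0]_(j < m) `|A i j|.

Definition ent_obj (R : realType) (n m : nat) (lam : R) (C pi : 'M[R]_(n, m)) : R :=
  frob C pi + lam * hent pi.

Definition is_Phi (R : realType) (n m : nat) (a : 'I_n -> R) (b : 'I_m -> R)
  (lam : R) (C P : 'M[R]_(n, m)) : Prop :=
  Pi a b P /\ (forall pi, Pi a b pi -> ent_obj lam C P <= ent_obj lam C pi).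

(* Main.v *)
Require Import Defs.
From HB Require Import structures.
From mathcomp Require Import all_boot all_order all_algebra.
From mathcomp Require Import all_classical all_reals all_analysis.
From mathcomp Require Import ring lra.
Import Order.TTheory GRing.Theory Num.Theory.
Local Open Scope ring_scope.

Section S.
Variable R : realType.
Definition gg (x : R) := ln x + 4 * (x + 1)^-1.
Lemma dg (x : R) : 0 < x -> is_derive x 1 gg (x^-1 - 4 * (x+1) ^- 2).
Proof.
move=> x0. rewrite /gg.
apply: is_derive_eq.
  apply: is_deriveD; first exact: is_derive1_ln.
  apply: is_deriveM. 
  apply: is_deriveV; first by rewrite gt_eqF // addr_gt0.
by rewrite /= addr0 scaler0 addr0; rewrite /GRing.scale /=; rewrite mulr1 mulrN.
Qed.


End S.
Section T.
Variable R : realType.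
Lemma ln_ge (r : R) : 1 <= r -> 2 <= ln r + 4 * (r + 1)^-1.
Proof.
move=> r1.
have := @ger0_derive1_ndecr R (@gg R) 1 r _ _ _ 1 r (lexx _) r1 (lexx _).
have -> : @gg R 1 = 2 by rewrite /gg ln1 add0r; field.
rewrite /gg; apply.
- move=> x; rewrite in_itv /= => /andP[x1 _].
  exact: (@ex_derive _ _ _ _ _ _ _ (@dg R x (lt_trans ltr01 x1))).
- move=> x; rewrite in_itv /= => /andP[x1 _].
  have x0 : 0 < x by lra.
  rewrite derive1E (@derive_val _ _ _ _ _ _ _ (@dg R x x0)).
  have -> : x^-1 - 4 * (x+1) ^- 2 = (x-1)^+2 / (x*(x+1)^+2).
    field. apply/andP; split; rewrite gt_eqF //; lra.
  by rewrite divr_ge0 // ?sqr_ge0 // mulr_ge0 // ?sqr_ge0 //; lra.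
- apply: derivable_within_continuous => x; rewrite in_itv /= => /andP[x1 _].
  exact: (@ex_derive _ _ _ _ _ _ _ (@dg R x (lt_le_trans ltr01 x1))).
Qed.
End T.

Section U.
Variable R : realType.
Lemma ln_le_sub (u : R) : 0 < u -> ln u <= u - 1.
Proof. move=> u0; have := expR_ge1Dx (ln u); rewrite lnK //; lra. Qed.

Lemma plog (p y : R) : 0 <= p -> 0 < y -> p * ln y - p * ln p <= y - p.
Proof.
move=> p0 y0; have [->|pp] := eqVneq p 0; first by rewrite !mul0r; lra.
have p1 : 0 < p by rewrite lt_def pp.
have := ln_le_sub _ (divr_gt0 y0 p1).
rewrite ln_div ?posrE // => H.
have := ler_wpM2l (ltW p1) H.
have -> : p * (y / p - 1) = y - p by field.
lra.
Qed.

Definition phi (x : R) := if x == 0 then 0 else x * ln (x / expR 1).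

Lemma phiE x : 0 <= x -> phi x = x * ln x - x.
Proof.
move=> xge; rewrite /phi; have [->|x0] := eqVneq x 0; first by rewrite mul0r subr0.
have xp : 0 < x by rewrite lt_def x0.
rewrite ln_div ?posrE ?expR_gt0 // expRK; ring.
Qed.

Lemma phi_step (p q t : R) : 0 <= p -> 0 <= q -> 0 < t < 1 ->
  phi (p + t * (q - p)) - phi p <= t * (q - p) * ln (p + t * (q - p)).
Proof.
move=> p0 q0 /andP[t0 t1].
have [->|pq] := eqVneq q p; first by rewrite subrr !mulr0 mul0r addr0 subrr.
have y0 : 0 < p + t * (q - p).
  have -> : p + t * (q - p) = (1 - t) * p + t * q by ring.
  have [pe|pp] := eqVneq p 0.
    rewrite pe in pq *.
    by rewrite mulr0 add0r mulr_gt0 // lt_def q0 andbT.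
  have : 0 < p by rewrite lt_def pp.
  nra.
rewrite !phiE //; last by apply: ltW.
have := plog _ _ p0 y0.
set y := p + t * (q - p).
have -> : t * (q - p) = y - p by rewrite /y; ring.
nra.
Qed.

Lemma sym_log (x y : R) : 0 < x -> 0 < y ->
  2 * (x - y)^+2 <= (x - y) * (ln x - ln y) * (x + y).
Proof.
wlog yx : x y / y <= x.
  move=> H x0 y0; have [|xy] := leP y x; first by move=> h; exact: H.
  have := H y x (ltW xy) y0 x0.
  have -> : (y - x)^+2 = (x - y)^+2 by ring.
  have -> : (y - x) * (ln y - ln x) * (y + x) = (x - y) * (ln x - ln y) * (x + y) by ring.
  done.
move=> x0 y0.
have r1 : 1 <= x / y by rewrite ler_pdivlMr // mul1r.
have := @ln_ge _ _ r1.
rewrite ln_div ?posrE //.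
have -> : 4 * (x / y + 1)^-1 = 4 * y / (x + y).
  field; apply/andP; split; rewrite gt_eqF //; lra.
move=> H.
have xy0 : 0 < x + y by lra.
have H2 : 2 * (x + y) - 4 * y <= (ln x - ln y) * (x + y).
  have := ler_wpM2r (ltW xy0) H.
  have -> : (ln x - ln y + 4 * y / (x + y)) * (x + y) = (ln x - ln y) * (x + y) + 4 * y.
    field; rewrite gt_eqF //.
  lra.
have yx0 : 0 <= x - y by rewrite subr_ge0.
have := ler_wpM2l yx0 H2.
have -> : (x - y) * (2 * (x + y) - 4 * y) = 2 * (x - y)^+2 by ring.
by rewrite -mulrA.
Qed.

Lemma entry_ineq (x y k : R) : 0 <= x -> 0 <= y -> (0 < x /\ 0 < y) \/ x = y ->
  4 * k * `|x - y| - 2 * k^+2 * (x + y) <= (x - y) * (ln x - ln y).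
Proof.
move=> x0 y0 [[xp yp]|<-]; last first.
  rewrite subrr normr0 mulr0 mul0r sub0r oppr_le0.
  apply: mulr_ge0; [apply: mulr_ge0 => //; exact: sqr_ge0 | lra].
have H := sym_log _ _ xp yp.
have s0 : 0 < x + y by lra.
set L := (x - y) * (ln x - ln y) in H *.
have e : `|x - y|^+2 = (x - y)^+2 by rewrite real_normK // num_real.
have ha : 0 <= `|x - y| by [].
set u := `|x - y| in e ha *.
have key : (4 * k * u - 2 * k^+2 * (x + y)) * (x + y) <= L * (x + y).
  have : 0 <= 2 * (u - k * (x + y))^+2 by rewrite mulr_ge0 // sqr_ge0.
  nra.
by rewrite ler_pM2r in key.
Qed.


Lemma pair_ineq (p1 p2 c1 c2 lam t k : R) : 0 <= p1 -> 0 <= p2 -> 0 < lam -> 0 < t -> t < 1/2 ->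
 (1 - 2*t) * ((c1*(p2-p1) + lam*((p2-p1)*ln(p1 + t*(p2-p1)))) + (c2*(p1-p2) + lam*((p1-p2)*ln(p2 + t*(p1-p2)))))
 <= (1-2*t)*((c1-c2)*(p2-p1)) + (- (lam*4*k*(1-2*t))) * `|p1 - p2| + (lam*2*k^+2) * (p1 + p2).
Proof.
move=> p10 p20 l0 t0 t1.
set q1 := p1 + t*(p2-p1); set q2 := p2 + t*(p1-p2).
have q10 : 0 <= q1 by rewrite /q1; nra.
have q20 : 0 <= q2 by rewrite /q2; nra.
have cond : (0 < q2 /\ 0 < q1) \/ q2 = q1.
  have [e|ne] := eqVneq p1 p2; first by right; rewrite /q1 /q2 e.
  left; have : 0 < p1 + p2.
    rewrite lt_def addr_ge0 // andbT; apply/eqP => h.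
    have p1z : p1 = 0 by lra.
    have p2z : p2 = 0 by lra.
    by rewrite p1z p2z eqxx in ne.
  move=> hs; have ht := mulr_gt0 t0 hs.
  have a1 : 0 <= (1 - 2 * t) * p1 by apply: mulr_ge0 => //; lra.
  have a2 : 0 <= (1 - 2 * t) * p2 by apply: mulr_ge0 => //; lra.
  split; rewrite /q1 /q2; lra.
have H := entry_ineq q2 q1 k q20 q10 cond.
have eN : `|q2 - q1| = (1 - 2 * t) * `|p1 - p2|.
  have -> : q2 - q1 = (1 - 2 * t) * (p2 - p1) by rewrite /q1 /q2; ring.
  rewrite normrM (distrC p2) (ger0_norm (x := 1 - 2 * t)) //; lra.
rewrite eN in H.
have H2 := ler_wpM2l (ltW l0) H.
have e1 : q2 - q1 = (1 - 2 * t) * (p2 - p1) by rewrite /q1 /q2; ring.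
have e2 : q2 + q1 = p1 + p2 by rewrite /q1 /q2; ring.
rewrite e1 e2 in H2.
set L1 := ln q1 in H2 *; set L2 := ln q2 in H2 *.
set u := `|p1 - p2| in H2 *.
lra.
Qed.
End U.

Section V.
Context {R : realType} {n m : nat} {a : 'I_n -> R} {b : 'I_m -> R}.

Lemma mass (P : 'M[R]_(n, m)) : simplex_pos a -> Pi a b P ->
  \sum_i \sum_j P i j = 1.
Proof.
move=> [_ sa] [_ [hr _]]; rewrite -sa; apply: eq_bigr => i _; exact: hr.
Qed.

Lemma mixPi (P P' : 'M[R]_(n, m)) t : Pi a b P -> Pi a b P' -> 0 < t < 1 ->
  Pi a b (\matrix_(i, j) (P i j + t * (P' i j - P i j))).
Proof.
move=> [p0 [pr pc]] [q0 [qr qc]] /andP[t0 t1]; split; [|split].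
- move=> i j; rewrite mxE.
  have -> : P i j + t * (P' i j - P i j) = (1 - t) * P i j + t * P' i j by ring.
  by rewrite addr_ge0 // mulr_ge0 //; lra.
- move=> i; under eq_bigr do rewrite mxE.
  by rewrite big_split /= -mulr_sumr sumrB pr qr subrr mulr0 addr0.
- move=> j; under eq_bigr do rewrite mxE.
  by rewrite big_split /= -mulr_sumr sumrB pc qc subrr mulr0 addr0.
Qed.

Lemma objE lam (C pi : 'M[R]_(n, m)) :
  ent_obj lam C pi = \sum_i \sum_j (C i j * pi i j + lam * @phi R (pi i j)).
Proof.
rewrite /ent_obj /frob /hent mulr_sumr -big_split; apply: eq_bigr => i _.
by rewrite mulr_sumr -big_split.
Qed.

Lemma opt_step lam (C P P' : 'M[R]_(n, m)) t : 0 < lam ->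
  is_Phi a b lam C P -> Pi a b P' -> 0 < t < 1 ->
  0 <= \sum_i \sum_j (C i j * (P' i j - P i j) +
        lam * ((P' i j - P i j) * ln (P i j + t * (P' i j - P i j)))).
Proof.
move=> l0 [HP opt] HP' ht.
have HQ := mixPi _ _ _ HP HP' ht.
have := opt _ HQ; rewrite !objE -subr_ge0 -sumrB => H.
case/andP: (ht) => t0 t1.
rewrite -(pmulr_rge0 _ t0); apply: le_trans H _.
rewrite mulr_sumr; apply: ler_sum => i _; rewrite -sumrB mulr_sumr.
apply: ler_sum => j _; rewrite !mxE.
case: HP => [p0 _]; case: HP' => [q0 _].
have h := ler_wpM2l (ltW l0) (@phi_step R _ _ _ (p0 i j) (q0 i j) ht).
set L := ln _ in h *.
lra.
Qed.

Lemma lin3 (x y z : R) (A B D : 'I_n -> 'I_m -> R) :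
  \sum_i \sum_j (x * A i j + y * B i j + z * D i j) =
  x * (\sum_i \sum_j A i j) + y * (\sum_i \sum_j B i j) + z * (\sum_i \sum_j D i j).
Proof.
rewrite !mulr_sumr -!big_split; apply: eq_bigr => i _.
by rewrite !mulr_sumr -!big_split.
Qed.

Lemma bmax_ge (I : eqType) (s : seq I) (F : I -> R) i : i \in s ->
  F i <= \big[Num.max/0]_(j <- s) F j.
Proof.
elim: s => // x s IH; rewrite in_cons big_cons => /orP[/eqP->|/IH h].
  by rewrite le_max lexx.
by rewrite le_max h orbT.
Qed.

Lemma bmax_ge0 (I : Type) (s : seq I) (F : I -> R) :
  0 <= \big[Num.max/0]_(j <- s) F j.
Proof.
elim: s => [|x s IH]; first by rewrite big_nil.
by rewrite big_cons le_max IH orbT.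
Qed.

Lemma norminf_ge (A : 'M[R]_(n, m)) i j : `|A i j| <= norminf A.
Proof.
rewrite /norminf.
apply: le_trans (bmax_ge _ _ (fun i => \big[Num.max/0]_(j < m) `|A i j|) _ (mem_index_enum i)).
exact: (bmax_ge _ _ (fun j => `|A i j|) _ (mem_index_enum j)).
Qed.

Lemma norminf_ge0 (A : 'M[R]_(n, m)) : 0 <= norminf A.
Proof. exact: bmax_ge0. Qed.

End V.

Theorem lemma1 (R : realType) (n m : nat) (a : 'I_n -> R) (b : 'I_m -> R)
  (lam : R) (C1 C2 P1 P2 : 'M[R]_(n, m)) :
  simplex_pos a -> simplex_pos b -> 0 < lam ->
  is_Phi a b lam C1 P1 -> is_Phi a b lam C2 P2 ->
  norm1 (P1 - P2) <= norminf (C1 - C2) / lam.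
Proof.
move=> sa sb l0 [HP1 opt1] [HP2 opt2].
set N := norm1 (P1 - P2); set M := norminf (C1 - C2).
set F := \sum_i \sum_j ((C1 i j - C2 i j) * (P2 i j - P1 i j)).
have N0 : 0 <= N by apply: sumr_ge0 => i _; apply: sumr_ge0.
have M0 : 0 <= M by apply: norminf_ge0.
have NE : N = \sum_i \sum_j `|P1 i j - P2 i j|.
  by apply: eq_bigr => i _; apply: eq_bigr => j _; rewrite !mxE.
have key : forall s, 0 < s < 1 -> lam * s * N^+2 <= F.
  move=> s /andP[s0 s1].
  set t := (1 - s) / 2.
  have t01 : 0 < t < 1 by apply/andP; split; rewrite /t; lra.
  have ts : 1 - 2 * t = s by rewrite /t; field.
  have h1 := opt_step _ _ _ _ _ l0 (conj HP1 opt1) HP2 t01.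
  have h2 := opt_step _ _ _ _ _ l0 (conj HP2 opt2) HP1 t01.
  set k := s * N / 2.
  have h3 := addr_ge0 h1 h2; rewrite -big_split /= in h3.
  have h4 := mulr_ge0 (ltW s0) h3.
  rewrite mulr_sumr in h4.
  have h5 : 0 <= \sum_i \sum_j (s * ((C1 i j - C2 i j) * (P2 i j - P1 i j))
              + (- (lam * 4 * k * s)) * `|P1 i j - P2 i j|
              + (lam * 2 * k^+2) * (P1 i j + P2 i j)).
    apply: le_trans h4 _; apply: ler_sum => i _; rewrite -big_split /= mulr_sumr.
    apply: ler_sum => j _.
    case: HP1 => [p10 _]; case: HP2 => [p20 _].
    rewrite -ts.
    apply: le_trans (@pair_ineq R _ _ (C1 i j) (C2 i j) lam t k (p10 i j) (p20 i j) l0 _ _) => //.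
    - by case/andP: t01.
    - lra.
  rewrite lin3 -NE in h5.
  have e2 : \sum_i \sum_j (P1 i j + P2 i j) = 2.
    rewrite (eq_bigr (fun i => \sum_j P1 i j + \sum_j P2 i j)); last first.
      by move=> i _; rewrite big_split.
    by rewrite big_split /= (mass _ sa HP1) (mass _ sa HP2).
  rewrite e2 -/F /k in h5.
  have h6 : 0 <= s * (F - lam * s * N^+2) by lra.
  by rewrite pmulr_rge0 // subr_ge0 in h6.
have FM : F <= M * N.
  rewrite NE mulr_sumr; apply: ler_sum => i _; rewrite mulr_sumr; apply: ler_sum => j _.
  apply: le_trans (ler_norm _) _; rewrite normrM (distrC (P2 i j)).
  apply: ler_wpM2r => //.
  by have := norminf_ge (C1 - C2) i j; rewrite !mxE.
have lim : lam * N^+2 <= M * N.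
  rewrite leNgt; apply/negP => hlt.
  set A := lam * N^+2 in hlt; set B := M * N in hlt FM.
  have B0 : 0 <= B by apply: mulr_ge0.
  have A0 : 0 < A by apply: le_lt_trans hlt.
  have A2 : 0 < 2 * A by rewrite mulr_gt0.
  have sA : 0 < (A + B) / (2 * A) < 1.
    apply/andP; split; first by apply: divr_gt0 => //; lra.
    rewrite ltr_pdivrMr //; lra.
  have := key _ sA.
  have -> : lam * ((A + B) / (2 * A)) * N ^+ 2 = ((A + B) / (2 * A)) * A by rewrite /A; ring.
  have -> : ((A + B) / (2 * A)) * A = (A + B) / 2 by field; rewrite gt_eqF.
  lra.
have [Nz|Np] := eqVneq N 0.
  by rewrite Nz divr_ge0 // ltW.
have Npos : 0 < N by rewrite lt_def Np N0.
rewrite ler_pdivlMr //.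
have : lam * N * N <= M * N by rewrite -mulrA -expr2.
rewrite ler_pM2r // mulrC; done.
Qed.
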